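(* Let $N$ be an odd prime, $V=\mathbb{Z}_N\times\mathbb{Z}_N$, and let $X=\{v_1,\dots,v_r\}\subset V$ be a set of $r$ points. Choose at random three (pairwise distinct) lines $L,M,M^\circ\subset V$, and assume that $X$ is generic with respect to each of $L$, $M$ and $M^\circ$. Then the probability $P$ that $X$ is perfect with respect to $L,M,M^\circ$ satisfies $$P\ge 1-\frac{r(r^2-r)}{N}.$$
   Context: A line in $V$ means a subset through $(0,0)$ of the form $\{(\tau,a\tau):\tau\in\mathbb{Z}_N\}$, $a\in\mathbb{Z}_N$, or $\{(0,\omega):\omega\in\mathbb{Z}_N\}$ ($N+1$ lines in total); a shifted line is a set $L+v$ with $L$ a line and $v\in V$. A set $X\subset V$ is generic with respect to a line $L$ if $u-v\notin L$ for all distinct $u,v\in X$. For a family $\mathcal{F}$ of shifted lines, a point $v\in V$ is an incidence point of $\mathcal{F}$ if it lies on at least two shifted lines of $\mathcal{F}$, and its incidence number is the number of shifted lines of $\mathcal{F}$ containing it. A collection $v_1,\dots,v_r$ is perfect with respect to lines $L_1,\dots,L_d$ if $v_1,\dots,v_r$ are the only incidence points of $\mathcal{F}=\{v_i+L_j:1\le i\le r,\,1\le j\le d\}$ with incidence number $d$. The probability is over the random choice of the lines, given the genericity assumption. *)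

(* Defs.v *)
From mathcomp Require Import all_boot all_algebra.
Set Implicit Arguments. Unset Strict Implicit. Unset Printing Implicit Defensive.
Import GRing.Theory.
Local Open Scope ring_scope.

Definition V (N : nat) : finType := ('Z_N * 'Z_N)%type.

Definition vadd N (u v : V N) : V N := (u.1 + v.1, u.2 + v.2).
Definition vsub N (u v : V N) : V N := (u.1 - v.1, u.2 - v.2).

(* The N+1 lines through the origin: {(t, a t)} for a in Z_N, and {(0, w)}. *)
Definition line (N : nat) (o : option 'Z_N) : {set V N} :=
  match o with
  | Some a => [set ((t, a * t) : V N) | t : 'Z_N]
  | None => [set ((0, w) : V N) | w : 'Z_N]
  end.

Definition lines (N : nat) : {set {set V N}} := [set line (N:=N) o | o : option 'Z_N].

Definition shift N (L : {set V N}) (v : V N) : {set V N} :=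
  [set vadd u v | u in L].

Definition generic N (X L : {set V N}) : bool :=
  [forall u in X, forall v in X, (u != v) ==> (vsub u v \notin L)].

Definition family N (X : {set V N}) (Ls : seq {set V N}) : {set {set V N}} :=
  [set shift L v | v in X, L in Ls].

Definition incnum N (X : {set V N}) (Ls : seq {set V N}) (p : V N) : nat :=
  #|[set l in family X Ls | p \in l]|.

(* X is perfect w.r.t. L_1..L_d: the incidence points (incidence number >= 2)
   of incidence number d are exactly the points of X. *)
Definition perfect N (X : {set V N}) (Ls : seq {set V N}) : bool :=
  [set p | (1 < incnum X Ls p)%N && (incnum X Ls p == size Ls)] == X.

Definition triple N := ({set V N} * {set V N} * {set V N})%type.

(* Sample space: ordered triples of pairwise distinct lines, conditioned on
   X being generic with respect to each of them. *)
Definition good_triples N (X : {set V N}) : {set triple N} :=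
  [set t : triple N |
    [&& t.1.1 \in lines N, t.1.2 \in lines N, t.2 \in lines N,
        t.1.1 != t.1.2, t.1.1 != t.2, t.1.2 != t.2,
        generic X t.1.1, generic X t.1.2 & generic X t.2]].

Definition perfect_triples N (X : {set V N}) : {set triple N} :=
  [set t in good_triples X | perfect X [:: t.1.1; t.1.2; t.2]].

(* Main.v *)
Require Import Defs.
From mathcomp Require Import all_boot all_algebra.
From mathcomp Require Import zify ring.
Set Implicit Arguments. Unset Strict Implicit. Unset Printing Implicit Defensive.
Import GRing.Theory Num.Theory.
Local Open Scope ring_scope.

Lemma Zp_mul_eq0 (N : nat) (x y : 'Z_N) : prime N -> x * y = 0 -> x = 0 \/ y = 0.
Proof.
move=> pN Hxy.
have N1 : (1 < N)%N by apply: prime_gt1.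
have HN : (Zp_trunc N).+2 = N by rewrite Zp_cast.
have := congr1 (@nat_of_ord _) Hxy => /=.
have Ha : (nat_of_ord x < N)%N by have := ltn_ord x; lia.
have Hb : (nat_of_ord y < N)%N by have := ltn_ord y; lia.
rewrite (_ : ((nat_of_ord x * nat_of_ord y) %% (Zp_trunc N).+2 = (nat_of_ord x * nat_of_ord y) %% N)%N); last by move: (nat_of_ord x * nat_of_ord y)%N => m; rewrite HN.
have : (nat_of_ord x = 0%N \/ nat_of_ord y = 0%N) -> x = 0 \/ y = 0.
  by case=> H; [left|right]; apply/ord_inj.
move=> HH H; apply: HH; move: H Ha Hb.
move: (nat_of_ord x) (nat_of_ord y) => a b.
move=> /eqP; rewrite -/(dvdn N _) Euclid_dvdM //.
case/orP => /dvdn_leq H Ha Hb.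
  by left; case: a Ha H => // m Hm H; have := H isT; lia.
by right; case: b Hb H => // m Hm H; have := H isT; lia.
Qed.

Lemma mem_line_some N (a : 'Z_N) (u : V N) : (u \in line (Some a)) = (u.2 == a * u.1).
Proof.
apply/imsetP/eqP => [[t _ ->]|] //=.
by case: u => x y /= ->; exists x.
Qed.

Lemma mem_line_none N (u : V N) : (u \in line None) = (u.1 == 0).
Proof.
apply/imsetP/eqP => [[t _ ->]|] //=.
by case: u => x y /= ->; exists y.
Qed.

Lemma linesP N (L : {set V N}) : L \in lines N -> exists o, L = line o.
Proof. by case/imsetP => o _ ->; exists o. Qed.

Lemma line_sub N (L : {set V N}) u w : L \in lines N -> u \in L -> w \in L -> vsub u w \in L.
Proof.
case/linesP => [[a|]] ->; rewrite ?mem_line_some ?mem_line_none /=.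
  by move=> /eqP -> /eqP ->; rewrite mulrBr.
by move=> /eqP -> /eqP ->; rewrite subr0.
Qed.

Lemma line_add N (L : {set V N}) u w : L \in lines N -> u \in L -> w \in L -> vadd u w \in L.
Proof.
case/linesP => [[a|]] ->; rewrite ?mem_line_some ?mem_line_none /=.
  by move=> /eqP -> /eqP ->; rewrite mulrDr.
by move=> /eqP -> /eqP ->; rewrite addr0.
Qed.

Lemma line0 N (L : {set V N}) : L \in lines N -> ((0,0) : V N) \in L.
Proof.
by case/linesP => [[a|]] ->; rewrite ?mem_line_some ?mem_line_none /= ?mulr0.
Qed.

Lemma lines_meet N (L M : {set V N}) d : prime N -> L \in lines N -> M \in lines N ->
  L != M -> d \in L -> d \in M -> d = (0, 0).
Proof.
move=> pN /linesP [o1 ->] /linesP [o2 ->] Hne.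
case: d => x y.
case: o1 o2 Hne => [a|] [b|] Hne; rewrite ?mem_line_some ?mem_line_none /=.
- move=> /eqP -> /eqP Hb.
  have : (a - b) * x = 0 by rewrite mulrBl Hb subrr.
  case/(Zp_mul_eq0 pN) => [/eqP|->]; last by rewrite mulr0.
  by rewrite subr_eq0 => /eqP Hab; rewrite Hab eqxx in Hne.
- by move=> /eqP -> /eqP ->; rewrite mulr0.
- by move=> /eqP -> /eqP ->; rewrite mulr0.
- by rewrite eqxx in Hne.
Qed.

Lemma mem_shift N (L : {set V N}) v p : (p \in shift L v) = (vsub p v \in L).
Proof.
apply/imsetP/idP => [[u Hu ->]|H].
  by rewrite /vsub /vadd /= !addrK; case: u Hu.
exists (vsub p v) => //; case: p {H} => a b; by rewrite /vadd /vsub /= !subrK.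
Qed.

Lemma vsub_eq0 N (u v : V N) : (vsub u v == (0,0)) = (u == v).
Proof.
case: u v => [a b] [c d]; rewrite /vsub /= !xpair_eqE !subr_eq0 //.
Qed.

Lemma vsub_trans N (p v w : V N) : vsub v w = vsub (vsub p w) (vsub p v).
Proof. by case: p v w => [? ?] [? ?] [? ?]; rewrite /vsub /=; congr pair; ring. Qed.

Lemma shift_eq N (L : {set V N}) v w : L \in lines N -> vsub v w \in L -> shift L v = shift L w.
Proof.
move=> HL Hvw; apply/setP => p; rewrite !mem_shift.
apply/idP/idP => H.
- have -> : vsub p w = vadd (vsub p v) (vsub v w).
    by case: p v w {H Hvw} => [? ?] [? ?] [? ?]; rewrite /vsub /vadd /=; congr pair; ring.
  exact: line_add.
- have -> : vsub p v = vsub (vsub p w) (vsub v w).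
    by case: p v w {H Hvw} => [? ?] [? ?] [? ?]; rewrite /vsub /vadd /=; congr pair; ring.
  exact: line_sub.
Qed.

Lemma shift_line_eq N (L M : {set V N}) v w : L \in lines N -> M \in lines N ->
  shift L v = shift M w -> L = M.
Proof.
move=> HL HM E.
have key : forall (L M : {set V N}) v w, L \in lines N -> M \in lines N ->
    shift L v = shift M w -> forall u, u \in L -> u \in M.
  move=> L' M' v' w' HL' HM' E' u Hu.
  have h1 : vadd u v' \in shift M' w' by rewrite -E' mem_shift /vsub /vadd /= !addrK; case: u Hu.
  have h2 : v' \in shift M' w' by rewrite -E' mem_shift; case: v' {E' h1} => a b; rewrite /vsub /= !subrr line0.
  rewrite mem_shift in h1; rewrite mem_shift in h2.
  have E2 : u = vsub (vsub (vadd u v') w') (vsub v' w').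
    by case: u v' w' {E' Hu h1 h2} => [? ?] [? ?] [? ?]; rewrite /vsub /vadd /=; congr pair; ring.
  by rewrite {1}E2; exact: line_sub HM' h1 h2.
apply/setP => u; apply/idP/idP; [exact: (key L M v w HL HM E u) | exact: (key M L w v HM HL (esym E) u)].
Qed.

Definition ex_sh N (X : {set V N}) L p := [exists v in X, p \in shift L v].
Definition AS N (X : {set V N}) L p := [set shift L v | v in [set v in X | p \in shift L v]].

Lemma card_AS N (X : {set V N}) L p : L \in lines N -> #|AS X L p| = ex_sh X L p.
Proof.
move=> HL; rewrite /ex_sh; case: (boolP [exists _ in _, _]) => [/exists_inP [v0 Hv0 Hp0] | Hn].
  rewrite (_ : AS X L p = [set shift L v0]) ?cards1 //.
  apply/setP => l; rewrite inE; apply/imsetP/eqP => [[v]|->].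
    rewrite inE => /andP [Hv Hp] ->; apply: shift_eq => //.
    rewrite mem_shift in Hp; rewrite mem_shift in Hp0.
    by rewrite (vsub_trans p); apply: line_sub.
  by exists v0; rewrite // inE Hv0 Hp0.
apply/eqP; rewrite cards_eq0; apply/eqP/setP => l; rewrite inE.
apply/imsetP => [[v]]; rewrite inE => /andP [Hv Hp] _; apply: (negP Hn).
by apply/exists_inP; exists v.
Qed.

Lemma AS_disj N (X : {set V N}) L M p : L \in lines N -> M \in lines N -> L != M ->
  AS X L p :&: AS X M p = set0.
Proof.
move=> HL HM Hne; apply/setP => l; rewrite !inE.
apply/negP => /andP [/imsetP [v _ ->] /imsetP [w _ E]].
by move: Hne; rewrite (shift_line_eq HL HM E) eqxx.
Qed.

Lemma incnum3 N (X : {set V N}) L M K p : L \in lines N -> M \in lines N -> K \in lines N ->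
  L != M -> L != K -> M != K ->
  incnum X [:: L; M; K] p = (ex_sh X L p + ex_sh X M p + ex_sh X K p)%N.
Proof.
move=> HL HM HK HLM HLK HMK; rewrite /incnum.
have -> : [set l in Defs.family X [:: L; M; K] | p \in l] = AS X L p :|: AS X M p :|: AS X K p.
  apply/setP => l; rewrite !inE; apply/idP/idP.
    case/andP => /imset2P [v L' Hv HL' ->] Hp; rewrite !inE in HL'; rewrite -orbA.
    by case/or3P: HL' => /eqP E; subst L'; apply/or3P;
      [constructor 1|constructor 2|constructor 3]; apply/imsetP; exists v; rewrite // inE Hv Hp.
  rewrite -orbA; case/or3P => /imsetP [v]; rewrite inE => /andP [Hv Hp] ->; rewrite Hp andbT;
    apply/imset2P; [exists v L|exists v M|exists v K]; rewrite // !inE eqxx ?orbT //.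
rewrite cardsU setIUl !AS_disj // setU0 cards0 subn0.
rewrite cardsU AS_disj // cards0 subn0 !card_AS //.
Qed.

Lemma vsubxx N (x : V N) : vsub x x = (0, 0).
Proof. by case: x => a b; rewrite /vsub /= !subrr. Qed.

Lemma vsub_trans2 N (u w a : V N) : vsub u w = vsub (vsub u a) (vsub w a).
Proof. by case: u w a => [? ?] [? ?] [? ?]; rewrite /vsub /=; congr pair; ring. Qed.

Lemma not_perfect_wit N (X : {set V N}) L M K : L \in lines N -> M \in lines N -> K \in lines N ->
  L != M -> L != K -> M != K -> ~~ perfect X [:: L; M; K] ->
  exists p, [/\ p \notin X, ex_sh X L p, ex_sh X M p & ex_sh X K p].
Proof.
move=> HL HM HK HLM HLK HMK; rewrite /perfect /=.
set S := [set p | _].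
have XS : X \subset S.
  apply/subsetP => x Hx; rewrite inE incnum3 //.
  have ex : forall L', L' \in lines N -> ex_sh X L' x.
    by move=> L' HL'; apply/exists_inP; exists x; rewrite // mem_shift vsubxx line0.
  by rewrite !ex.
rewrite eqEsubset XS andbT => /subsetPn [p]; rewrite inE incnum3 // => Hp HpX.
exists p; split => //; move: Hp;
  by case: (ex_sh X L p); case: (ex_sh X M p); case: (ex_sh X K p).
Qed.

Definition U3 N (X : {set V N}) := [set w : 3.-tuple (V N) | all (mem X) w & uniq w].

Lemma card_U3 N (X : {set V N}) : #|U3 X| = (#|X| ^_ 3)%N.
Proof. by rewrite /U3 card_uniq_tuples. Qed.

Lemma good_inv N (X : {set V N}) (t : triple N) : t \in good_triples X ->
  [/\ t.1.1 \in lines N, t.1.2 \in lines N, t.2 \in lines N &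
      [/\ t.1.1 != t.1.2, t.1.1 != t.2 & t.1.2 != t.2]].
Proof. by rewrite inE => /and5P [-> -> -> -> /and5P [-> -> _ _ _]]. Qed.

Lemma bad_fiber N (X : {set V N}) L M : prime N ->
  (#|[set t in good_triples X :\: perfect_triples X | t.1 == (L, M)]| <= #|X| ^_ 3)%N.
Proof.
move=> pN.
set B := [set t in _ | _].
pose p0 : V N := (0, 0).
pose P (t : triple N) (w : 3.-tuple (V N)) := [exists p, [&& p \notin X,
   p \in shift t.1.1 (nth p0 w 0), p \in shift t.1.2 (nth p0 w 1) & p \in shift t.2 (nth p0 w 2)]].
pose w0 : 3.-tuple (V N) := [tuple p0; p0; p0].
pose f t := odflt w0 [pick w in U3 X | P t w].
have Hf : forall t, t \in B -> f t \in U3 X /\ P t (f t).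
  move=> t; rewrite inE in_setD => /andP [/andP [Hnp Hg] _].
  have [HL HM HK [HLM HLK HMK]] := good_inv Hg.
  have Hnp' : ~~ perfect X [:: t.1.1; t.1.2; t.2] by move: Hnp; rewrite /perfect_triples in_set Hg.
  have [p [HpX /exists_inP [a Ha Hpa] /exists_inP [b Hb Hpb] /exists_inP [c Hc Hpc]]] :=
    not_perfect_wit HL HM HK HLM HLK HMK Hnp'.
  rewrite mem_shift in Hpa; rewrite mem_shift in Hpb; rewrite mem_shift in Hpc.
  have neq : forall (L1 L2 : {set V N}) (a1 b1 : V N), L1 \in lines N -> L2 \in lines N -> L1 != L2 ->
     vsub p a1 \in L1 -> vsub p b1 \in L2 -> a1 \in X -> a1 != b1.
    move=> L1 L2 a1 b1 H1 H2 H12 Ha1 Hb1 Xa1; apply/negP => /eqP E; subst b1.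
    have := lines_meet pN H1 H2 H12 Ha1 Hb1 => /eqP; rewrite vsub_eq0 => /eqP E.
    by move: HpX; rewrite E Xa1.
  rewrite /f; case: pickP => [w /andP [] //|/(_ [tuple a; b; c])].
  rewrite /P inE /= Ha Hb Hc /= !inE negb_or (neq _ _ _ _ HL HM HLM Hpa Hpb Ha) (neq _ _ _ _ HL HK HLK Hpa Hpc Ha)
     (neq _ _ _ _ HM HK HMK Hpb Hpc Hb) /=.
  rewrite /= => /negbT/negP []; apply/existsP; exists p; rewrite HpX !mem_shift Hpa Hpb Hpc.
  done.
have inj : {in B &, injective f}.
  move=> t1 t2 H1 H2 E.
  have [U1 P1] := Hf _ H1; have [U2 P2] := Hf _ H2.
  rewrite E in U1 P1.
  move: H1; rewrite inE in_setD => /andP [/andP [_ G1] /eqP E1].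
  move: H2; rewrite inE in_setD => /andP [/andP [_ G2] /eqP E2].
  have [HL1 HM1 HK1 [HLM1 _ _]] := good_inv G1.
  have [HL2 HM2 HK2 _] := good_inv G2.
  clear E U2; move: (f t2) U1 P1 P2 => w Uw /existsP [p1 /and4P [Hp1 Ha1 Hb1 Hc1]] /existsP [p2 /and4P [Hp2 Ha2 Hb2 Hc2]].
  rewrite !mem_shift E1 in Ha1 Hb1 Hc1; rewrite !mem_shift E2 in Ha2 Hb2 Hc2.
  clear G1 G2; case: t1 t2 E1 E2 HLM1 HL1 HM1 HK1 HL2 HM2 HK2 Ha1 Hb1 Hc1 Ha2 Hb2 Hc2 => [[L1 M1] K1] [[L2 M2] K2] /= E1 E2.
  case: E1 => -> ->; case: E2 => -> -> {L1 M1 L2 M2}.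
  move=> HLM HL HM HK1 _ _ HK2 Ha1 Hb1 Hc1 Ha2 Hb2 Hc2.
  have E12 : p1 = p2.
    apply/eqP; rewrite -vsub_eq0; apply/eqP; apply: (lines_meet pN HL HM HLM).
      by rewrite (vsub_trans2 p1 p2 (nth p0 w 0)); exact: line_sub.
    by rewrite (vsub_trans2 p1 p2 (nth p0 w 1)); exact: line_sub.
  subst p2.
  case: (eqVneq K1 K2) => [->//|HK].
  have := lines_meet pN HK1 HK2 HK Hc1 Hc2 => /eqP; rewrite vsub_eq0 => /eqP E.
  have : nth p0 w 2 \in X.
    rewrite inE in Uw; case/andP: Uw => /allP H _; apply: H; apply: mem_nth; by rewrite size_tuple.
  by rewrite -E (negbTE Hp1).
rewrite -(card_in_imset inj) -card_U3; apply: subset_leq_card.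
by apply/subsetP => w /imsetP [t Ht ->]; exact: (Hf t Ht).1.
Qed.

Lemma lines_ge N : prime N -> (N <= #|lines N|)%N.
Proof.
move=> pN.
have inj : injective (fun a : 'Z_N => line (Some a)).
  move=> a b E; have : ((1, a) : V N) \in line (Some a) by rewrite mem_line_some /= mulr1.
  by rewrite E mem_line_some /= mulr1 => /eqP.
have HN : #|[set: 'Z_N]| = N by rewrite cardsT card_ord Zp_cast ?prime_gt1.
rewrite -{1}HN -(card_imset [set: 'Z_N] inj).
apply: subset_leq_card; apply/subsetP => L /imsetP [a _ ->]; exact: imset_f.
Qed.

Lemma lines_unique N (L L' : {set V N}) d : prime N -> L \in lines N -> L' \in lines N ->
  d != (0, 0) -> d \in L -> d \in L' -> L = L'.
Proof.
move=> pN HL HL' Hd H1 H2; apply/eqP; apply: contraR Hd => Hne.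
by apply/eqP; apply: (lines_meet pN HL HL' Hne).
Qed.

Lemma nongen_le N (X : {set V N}) : prime N ->
  (#|[set L in lines N | ~~ generic X L]| <= #|X| ^_ 2)%N.
Proof.
move=> pN.
pose p0 : V N := (0, 0).
pose U2 := [set w : 2.-tuple (V N) | all (mem X) w & uniq w].
pose g (w : 2.-tuple (V N)) := odflt set0 [pick L in lines N | vsub (nth p0 w 0) (nth p0 w 1) \in L].
apply: (@leq_trans #|g @: U2|); last first.
  by apply: leq_trans (leq_imset_card _ _) _; rewrite card_uniq_tuples.
apply: subset_leq_card; apply/subsetP => L; rewrite inE => /andP [HL].
case/forall_inPn => u Hu /forall_inPn [v Hv]; rewrite negb_imply negbK => /andP [Huv HuvL].
apply/imsetP; exists [tuple u; v].
  by rewrite inE /= Hu Hv /= inE Huv.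
rewrite /g /=; case: pickP => [L' /andP [HL' HdL']|/(_ L)]; last by rewrite HL HuvL.
apply: (lines_unique pN HL HL' _ HuvL HdL').
by rewrite vsub_eq0.
Qed.

Lemma card_partition_fst (T I : finType) (f : T -> I) (A : {set T}) :
  #|A| = (\sum_(i : I) #|[set x in A | f x == i]|)%N.
Proof.
rewrite -sum1_card (partition_big f xpredT) //=; apply: eq_bigr => i _.
by rewrite -sum1_card; apply: eq_bigl => x; rewrite inE.
Qed.

Lemma good_fiber N (X : {set V N}) (pq : {set V N} * {set V N}) (t0 : triple N) :
  t0 \in good_triples X -> t0.1 = pq ->
  (#|[set L in lines N | generic X L]| <= #|[set t in good_triples X | t.1 == pq]| + 2)%N.
Proof.
case: pq => L M Ht0 E0.
have : [&& L \in lines N, M \in lines N, L != M, generic X L & generic X M].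
  by move: Ht0; rewrite inE E0 /= => /and5P [-> -> _ -> /and5P [_ _ -> -> _]].
case/and5P => HL HM HLM GL GM.
set gl := [set L in lines N | generic X L].
have inj : injective (fun K : {set V N} => ((L, M, K) : triple N)) by move=> ? ? [].
have sub : (fun K : {set V N} => ((L, M, K) : triple N)) @: (gl :\ L :\ M) \subset
           [set t in good_triples X | t.1 == (L, M)].
  apply/subsetP => t /imsetP [K]; rewrite !inE => /and4P [HKM HKL HK GK] ->.
  by rewrite /= eqxx HL HM HK HLM GL GM GK andbT eq_sym HKL eq_sym HKM.
have := subset_leq_card sub; rewrite card_imset //.
rewrite (cardsD1 L gl) (cardsD1 M (gl :\ L)).
have := leq_b1 (L \in gl); have := leq_b1 (M \in gl :\ L).
move: (nat_of_bool _) (nat_of_bool _) #|gl :\ L :\ M| #|[set t in good_triples X | t.1 == (L, M)]| => a b c d.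
lia.
Qed.

Local Close Scope ring_scope.
Lemma arith (N r b g : nat) : (b <= g -> b <= r * (r - 1) * (r - 2) -> N <= g + 2 + r * (r - 1) ->
  N * b <= r * (r * r - r) * g)%N.
Proof.
move=> Hbg Hb HN.
have [Hk|Hk] := leqP N (r * (r * r - r)).
  by apply: leq_trans (leq_mul Hk Hbg); rewrite mulnC leq_mul2r leqnn orbT.
have [Hr|Hr] := leqP r 2.
  have -> : b = 0 by move: Hb; case: r Hr {Hk HN} => [|[|[|]]] //; rewrite ?muln0 ?mul0n; lia.
  by rewrite muln0.
have [s Er] : exists s, r = s + 3 by exists (r - 3); lia.
subst r.
have E1 : (s + 3) * (s + 3 - 1) * (s + 3 - 2) = (s+3)*(s+2)*(s+1) by congr (_ * _ * _); lia.
have E2 : (s + 3) * ((s + 3) * (s + 3) - (s + 3)) = (s+3)*(s+3)*(s+2).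
  rewrite -mulnA; congr (_ * _); rewrite -[X in _ - X]muln1 -mulnBr; lia.
have E3 : (s + 3) * (s + 3 - 1) = (s+3)*(s+2) by congr (_ * _); lia.
rewrite E2; rewrite E2 in Hk.
have Hb' : b <= (s+3)*(s+2)*(s+1) by rewrite -E1.
have HN' : N <= g + 2 + (s+3)*(s+2) by rewrite -E3.
clear E1 E2 E3 Hb HN.
apply: (leq_trans (leq_mul (leqnn N) Hb')).
have Hg : N - 2 - (s+3)*(s+2) <= g by lia.
apply: leq_trans (leq_mul (leqnn ((s+3)*(s+3)*(s+2))) Hg).
nia.
Qed.
Local Open Scope ring_scope.

Unset Implicit Arguments.
Theorem mainTheorem3 (N : nat) (X : {set V N}) (r : nat) :
  prime N -> odd N -> #|X| = r ->
  (1 - (r%:R * (r%:R ^+ 2 - r%:R)) / N%:R) * (#|good_triples X|%:R : rat)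
    <= (#|perfect_triples X|%:R : rat).
Proof.
move=> pN _ Hr.
set good := good_triples X; set perf := perfect_triples X.
have Hsub : perf \subset good.
  by apply/subsetP => t; rewrite /perf /perfect_triples in_set => /andP [].
have Hcard : #|good| = (#|perf| + #|good :\: perf|)%N.
  by rewrite -(cardsID perf good) (setIidPr Hsub).
have key : (N * #|good :\: perf| <= r * (r * r - r) * #|good|)%N.
  rewrite (card_partition_fst (fun t : triple N => t.1) (good :\: perf)).
  rewrite (card_partition_fst (fun t : triple N => t.1) good) !big_distrr /=.
  apply: leq_sum => [[L M]] _.
  set gf := [set t in good | t.1 == (L, M)].
  set bf := [set t in good :\: perf | t.1 == (L, M)].
  have bg : bf \subset gf.
    apply/subsetP => t; rewrite [t \in bf]inE => /andP [H E]; rewrite [t \in gf]inE E andbT.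
    by move: H; rewrite in_setD => /andP [_ ->].
  case: (set_0Vmem gf) => [E|[t0 Ht0]].
    have : #|bf| = 0%N by apply/eqP; rewrite cards_eq0 -subset0 -E.
    by move=> ->; rewrite muln0.
  apply: arith; first exact: subset_leq_card.
    have := bad_fiber X L M pN; rewrite Hr -/good -/perf -/bf.
    rewrite !ffactnS ffactn0 muln1 mulnA.
    have -> : r.-2 = (r - 2)%N by lia.
    have -> : r.-1 = (r - 1)%N by lia.
    done.
  move: Ht0; rewrite inE => /andP [Hg0 /eqP E0].
  have H1 := good_fiber Hg0 E0; rewrite -/good -/gf in H1.
  have H2 := lines_ge pN.
  have H3 := nongen_le X pN; rewrite Hr in H3.
  have H4 := cardsID [set L in lines N | generic X L] (lines N).
  have E4 : lines N :&: [set L in lines N | generic X L] = [set L in lines N | generic X L].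
    by apply/setP => L'; rewrite !inE andbA andbb.
  have E5 : lines N :\: [set L in lines N | generic X L] = [set L in lines N | ~~ generic X L].
    by apply/setP => L'; rewrite !inE; case: (L' \in lines N); case: (generic X L').
  rewrite E4 E5 in H4.
  move: H3; rewrite !ffactnS ffactn0 => H3.
  rewrite muln1 in H3; have -> : (r - 1)%N = r.-1 by lia.
  move: H1 H2 H3 H4; move: (r * r.-1)%N => k.
  move: #|[set L in lines N | generic X L]| => a.
  move: #|[set L in lines N | ~~ generic X L]| => c.
  move: #|lines N| => m. move: #|gf| => g.
  lia.
have rr : (r <= r * r)%N by nia.
rewrite expr2 -natrM -natrB // -natrM.
set k := (r * (r * r - r))%N in key *.
have N0 : (0 < N%:R :> rat) by rewrite ltr0n prime_gt0.
rewrite mulrBl mul1r lerBlDr Hcard natrD lerD2l mulrAC ler_pdivlMr //.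
by rewrite -natrD -!natrM ler_nat -Hcard mulnC.
Qed.
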